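(* Let $m\in\mathbb{N}$, let $\lambda_1<\dots<\lambda_m$ be real numbers and $\Lambda=\operatorname{diag}(\lambda_1,\dots,\lambda_m)$. Let $G$ be a tree with vertex set $[m]$. Let $g:E(G)\to\mathbb{N}$ be any function, let $N_0\in\mathbb{N}$ satisfy $N_0>\max\{g(e):e\in E(G)\}\cdot\operatorname{diam}(G)$, and define $f:E(G)\to\mathbb{N}$ by $f(e)=N_0+g(e)$. For $i,j\in V(G)$ let $P(i,j)$ be the (unique) path in $G$ from $i$ to $j$, and set $$c(i,j):=\prod_{k\in V(P(i,j))\setminus\{j\}}(\lambda_j-\lambda_k)^{-1},\qquad s(i,j):=\sum_{e\in E(P(i,j))}f(e),$$ so that $c(j,j)=1$, $s(j,j)=0$ and $c(i,j)\neq0$. Suppose $t_n>0$ with $t_n\to0$, and $A_n\in\mathcal M_{f,G}(t_n)\cap\mathcal E_\Lambda$ with $A_n\to\Lambda$ as $n\to\infty$. For each $n$ let $U_n=(u_n(i,j))$ be a real orthogonal matrix with nonnegative diagonal entries such that $U_n^\top A_nU_n=\Lambda$. Then for all $i,j\in V(G)$, $$\frac{u_n(i,j)}{t_n^{s(i,j)}}\to c(i,j)\quad\text{as }n\to\infty.$$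
   Context: For a simple graph $G$ on vertex set $[m]$, $S(G)$ is the set of real symmetric $m\times m$ matrices $A=(a(i,j))$ such that for $i\neq j$, $a(i,j)\neq0$ iff $\{i,j\}\in E(G)$; diagonal entries are unrestricted. For $f:E(G)\to\mathbb{N}$ and $t\in\mathbb{R}$, $\mathcal M_{f,G}(t):=\{A=(a(i,j))\in S(G): a(i,j)=t^{f(\{i,j\})}\text{ for }\{i,j\}\in E(G)\}$. $\mathcal E_\Lambda$ is the set of real symmetric $m\times m$ matrices with eigenvalues $\lambda_1,\dots,\lambda_m$. $\operatorname{diam}(G)$ is the diameter of $G$. *)

(* Defs.v *)
From HB Require Import structures.
From mathcomp Require Import all_boot all_order all_algebra.
From mathcomp Require Import all_classical all_reals all_analysis.
Set Implicit Arguments. Unset Strict Implicit. Unset Printing Implicit Defensive.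
Import Order.TTheory GRing.Theory Num.Theory.
Local Open Scope ring_scope.

Definition simple_graph (T : finType) (e : rel T) : Prop :=
  (forall x y, e x y = e y x) /\ (forall x, ~~ e x x).

Definition connected_graph (T : finType) (e : rel T) : Prop :=
  forall x y, connect e x y.
Definition acyclic_graph (T : finType) (e : rel T) : Prop :=
  forall c : seq T, (3 <= size c)%N -> uniq c -> ~~ cycle e c.
Definition is_tree (T : finType) (e : rel T) : Prop :=
  simple_graph e /\ connected_graph e /\ acyclic_graph e.

(* [p] describes a (simple) path from i to j: the vertex list is i :: p. *)
Definition is_gpath (T : finType) (e : rel T) (i j : T) (p : seq T) : bool :=
  [&& path e i p, last i p == j & uniq (i :: p)].

Fixpoint nball (T : finType) (e : rel T) (n : nat) (i : T) : {set T} :=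
  match n with
  | 0 => [set i]
  | n'.+1 => nball e n' i :|: [set y | [exists x in nball e n' i, e x y]]
  end.
Definition gdist (T : finType) (e : rel T) (i j : T) : nat :=
  find (fun n => j \in nball e n i) (iota 0 #|T|).
Definition diam (T : finType) (e : rel T) : nat :=
  \max_(i : T) \max_(j : T) gdist e i j.

(* Edge weights: a symmetric function w on pairs; only values on edges matter. *)
Definition max_on_edges (T : finType) (e : rel T) (w : T -> T -> nat) : nat :=
  \max_(i : T) \max_(j : T | e i j) w i j.

Definition path_weight (T : finType) (f : T -> T -> nat) (i : T) (p : seq T) : nat :=
  (\sum_(x <- zip (i :: p) p) f x.1 x.2)%N.

Definition path_coef (R : realType) (m : nat) (lam : 'I_m -> R) (i j : 'I_m)
  (p : seq 'I_m) : R :=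
  \prod_(k <- belast i p) (lam j - lam k)^-1.

Definition in_MfG (R : realType) (m : nat) (e : rel 'I_m) (f : 'I_m -> 'I_m -> nat)
  (t : R) (A : 'M[R]_m) : Prop :=
  A^T = A /\
  forall i j : 'I_m, i != j -> A i j = (if e i j then t ^+ f i j else 0).

(* E_Lambda: real symmetric matrices whose eigenvalues (with multiplicity)
   are lam_1, ..., lam_m, i.e. whose characteristic polynomial is
   prod_k (X - lam_k). *)
Definition in_E (R : realType) (m : nat) (lam : 'I_m -> R) (A : 'M[R]_m) : Prop :=
  A^T = A /\ char_poly A = \prod_(k < m) ('X - (lam k)%:P).

(* Main.v *)
Require Import Defs.
From HB Require Import structures.
From mathcomp Require Import all_boot all_order all_algebra.
From mathcomp Require Import all_classical all_reals all_analysis.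
From mathcomp Require Import ring lra.
Import Order.TTheory GRing.Theory Num.Theory.
Import numFieldNormedType.Exports.
Local Open Scope ring_scope.
Local Open Scope classical_set_scope.

Lemma gpath_nil {T : finType} {e : rel T} {j : T} {p : seq T} :
  is_gpath e j j p -> p = [::].
Proof.
case: p => [//|x p] /and3P [_ /eqP Hl /andP [Hj _]].
by move: (mem_last x p); rewrite /= in Hl; rewrite Hl (negbTE Hj).
Qed.

Lemma gpath_cons {T : finType} (e : rel T) (a j x : T) (p : seq T) :
  is_gpath e a j (x :: p) = [&& e a x, a \notin x :: p & is_gpath e x j p].
Proof.
rewrite /is_gpath /=. 
by case: (e a x); case: (a \in x :: p); case: (path e x p); case: (last x p == j);
  case: (x \in p); case: (uniq p).
Qed.

Lemma split_first {T : eqType} {a : pred T} {Y : seq T} :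
  has a Y -> exists s2 z r2, [/\ Y = s2 ++ z :: r2, a z & ~~ has a s2].
Proof.
elim: Y => [//|y Y IH] /=.
case Hy: (a y) => /=.
  by move=> _; exists [::], y, Y.
move=> /IH [s2 [z [r2 [-> Hz Hs]]]].
by exists (y :: s2), z, r2; rewrite /= Hy.
Qed.

Lemma mem_split {T : eqType} {z : T} {s : seq T} :
  z \in s -> exists s1 r1, s = s1 ++ z :: r1.
Proof. by case/splitPr => s1 r1; exists s1, r1. Qed.

Lemma gpath_unique {T : finType} {e : rel T} {j : T} :
  (forall x y, e x y = e y x) -> acyclic_graph e ->
  forall p q a, is_gpath e a j p -> is_gpath e a j q -> p = q.
Proof.
move=> esym acyc.
elim=> [|x p IH] q a.
  move=> /and3P [_ /eqP /= <- _] Hq; by rewrite (gpath_nil Hq).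
move=> Hp.
case: q => [|y q].
  move=> /and3P [_ /eqP /= Haj _]; move: Hp; rewrite -Haj => /gpath_nil; done.
move=> Hq.
have := Hp; rewrite gpath_cons => /and3P [eax nap Hp'].
have := Hq; rewrite gpath_cons => /and3P [eay naq Hq'].
case: (x =P y) => [exy|nxy].
  by rewrite -exy in Hq' *; rewrite (IH q x Hp' Hq').
exfalso.
set X := x :: p; set Y := y :: q.
have jX : j \in X.
  by move: Hp' => /and3P [_ /eqP <- _]; apply: mem_last.
have jY : j \in Y.
  by move: Hq' => /and3P [_ /eqP <- _]; apply: mem_last.
have hY : has (mem X) Y by apply/hasP; exists j.
have [s2 [z [r2 [EY zX ns2]]]] := split_first hY.
have EXe : exists s1 r1, X = s1 ++ z :: r1 by apply: mem_split; exact: zX.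
case: EXe => s1 [r1 EX].
move: Hp Hq; rewrite /is_gpath -/X -/Y EX EY.
move=> /and3P [pX _ uX] /and3P [pY _ uY].
move: pX; rewrite cat_path => /andP [ps1 /= /andP [ez _]].
move: pY; rewrite cat_path => /andP [ps2 /= /andP [ez2 _]].
have {}uX : uniq (a :: s1 ++ z :: r1) := uX.
have {}uY : uniq (a :: s2 ++ z :: r2) := uY.
have as1 : a \notin s1 by move: uX => /andP []; rewrite mem_cat negb_or => /andP [].
have az : a != z by move: uX => /andP []; rewrite mem_cat negb_or inE negb_or => /and3P [].
have as2 : a \notin s2 by move: uY => /andP []; rewrite mem_cat negb_or => /andP [].
move: uX uY; rewrite !cons_uniq => /andP [_ uX] /andP [_ uY].
have us1 : uniq s1 by move: uX; rewrite cat_uniq => /and3P [].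
have us2 : uniq s2 by move: uY; rewrite cat_uniq => /and3P [].
have zs1 : z \notin s1.
  by move: uX; rewrite cat_uniq => /and3P [_ /hasPn H _]; apply: H; rewrite inE eqxx.
have zs2 : z \notin s2.
  by move: uY; rewrite cat_uniq => /and3P [_ /hasPn H _]; apply: H; rewrite inE eqxx.
have ds : forall u, u \in s2 -> u \notin s1.
  move=> u us; have : u \notin X by apply: (hasPn ns2).
  by rewrite EX mem_cat negb_or => /andP [].
have : ~~ cycle e (a :: s1 ++ z :: rev s2).
  apply: acyc.
  - rewrite /= size_cat /= size_rev.
    case: s1 EX {ps1 ez as1 zs1 uX us1 ds} => [|u s1] EX; last by rewrite /= addSn addnS !ltnS.
    case: s2 EY {ps2 ez2 as2 zs2 uY us2 ns2} => [|u s2] EY; last by rewrite /= add0n.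
    by exfalso; apply: nxy; rewrite /X /Y /= in EX EY; case: EX => ->; case: EY.
  - rewrite cons_uniq mem_cat inE mem_rev negb_or negb_or as1 az as2 /=.
    rewrite cat_uniq us1 /= mem_rev zs2 rev_uniq us2 /= andbT (negPf zs1) /=.
    by apply/hasPn => u; rewrite mem_rev; apply: ds.
rewrite /= rcons_cat /= cat_path ps1 /= ez /=.
rewrite -rev_cons; apply/negPn.
have := rev_path e a (rcons s2 z); rewrite last_rcons belast_rcons => ->.
rewrite (@eq_path _ _ e); first by rewrite rcons_path ps2 ez2.
by move=> u v /=; rewrite esym.
Qed.

Lemma gpath_exists {T : finType} {e : rel T} (j k : T) :
  connected_graph e -> exists p, is_gpath e k j p.
Proof.
move=> /(_ k j) /connectP [p pp ->].
case: (shortenP pp) => p' pp' up' _.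
by exists p'; rewrite /is_gpath pp' up' eqxx.
Qed.

Lemma gpath_next {T : finType} {e : rel T} {j : T} {P : T -> seq T} (a b : T) :
  (forall x y, e x y = e y x) -> acyclic_graph e ->
  (forall k, is_gpath e k j (P k)) ->
  e a b -> a \notin b :: P b -> P a = b :: P b.
Proof.
move=> esym acyc HP eab nab.
apply: (gpath_unique esym acyc _ _ _ (HP a)).
by rewrite gpath_cons eab nab HP.
Qed.

Lemma edge_par {T : finType} {e : rel T} {j : T} {P : T -> seq T} (a b : T) :
  (forall x y, e x y = e y x) -> (forall x, ~~ e x x) -> acyclic_graph e ->
  (forall k, is_gpath e k j (P k)) ->
  e a b -> P a = b :: P b \/ P b = a :: P a.
Proof.
move=> esym eirr acyc HP eab.
case: (boolP (a \in b :: P b)) => Hab; last by left; apply: gpath_next.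
right; apply: gpath_next => //; first by rewrite esym.
have nab : a != b by apply/eqP => E; move: eab; rewrite E (negPf (eirr b)).
have aP : a \in P b by move: Hab; rewrite inE (negPf nab).
have [s [r Er]] := mem_split aP.
have := HP b; rewrite /is_gpath Er => /and3P [pb lb ub].
have Ha : is_gpath e a j r.
  rewrite /is_gpath.
  move: pb; rewrite cat_path /= => /and3P [_ _ ->].
  have -> : last a r = last b (s ++ a :: r) by rewrite last_cat.
  rewrite lb /=.
  by move: ub; rewrite cons_uniq cat_uniq => /andP [_ /and3P [_ _ H]].
rewrite (gpath_unique esym acyc _ _ _ (HP a) Ha).
move: ub; rewrite cons_uniq mem_cat negb_or => /andP [/andP [_ H] _].
exact: H.
Qed.
Lemma sum_le_const (R : realDomainType) (m : nat) (P : pred 'I_m) (F : 'I_m -> R) (c : R) :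
  0 <= c -> (forall k, P k -> F k <= c) -> \sum_(k | P k) F k <= m%:R * c.
Proof.
move=> c0 Hc.
apply: (@le_trans _ _ (\sum_(k < m) c)).
  rewrite [leRHS](bigID P) /= -[leLHS]addr0.
  apply: lerD; first by apply: ler_sum => k /Hc.
  by apply: sumr_ge0.
by rewrite sumr_const card_ord mulr_natl.
Qed.

Lemma bound_step (R : realFieldType) (m : nat) (e : rel 'I_m) (j : 'I_m)
  (d : 'I_m -> nat) (par : 'I_m -> 'I_m -> bool) (w D : 'I_m -> R)
  (tau : 'I_m -> 'I_m -> R) (delta t K : R) :
  0 < delta -> 1 <= K -> 0 <= t ->
  (forall a k, e a k -> par a k -> d a = (d k).+1) ->
  (forall a k, e a k -> ~~ par a k -> d k = (d a).+1) ->
  (forall a, a != j -> delta <= `|D a|) ->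
  (forall a, a != j ->
     D a * w a = \sum_(k | e a k) (if par a k then w k else tau a k * w k)) ->
  (forall a k, `|tau a k| <= t) ->
  m%:R * (K^-1 + t * K) <= delta / 2 ->
  `|w j| <= 1 -> d j = 0%N ->
  forall k, `|w k| <= K ^+ d k.
Proof.
move=> d0 K1 t0 Hpar Hch HD Heq Htau Hm wj dj.
have K0 : 0 < K by apply: lt_le_trans K1.
have Kn0 : forall n, 0 < K ^+ n by move=> n; apply: exprn_gt0.
pose u k := `|w k| / K ^+ d k.
have [kmax _ Hmax] := @arg_maxP _ _ 'I_m j predT u isT.
have umax : u kmax <= 1.
  case: (eqVneq kmax j) => [->|nj].
    by rewrite /u dj expr0 divr1.
  set M := u kmax.
  have M0 : 0 <= M by rewrite /M /u divr_ge0 // ?normr_ge0 // ltW.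
  suff : delta * M <= delta / 2 * M.
    by move=> H; nra.
  have uk : forall k, u k <= M by move=> k; exact: (Hmax k isT).
  have Kd : forall k, `|w k| = u k * K ^+ d k.
    by move=> k; rewrite /u divfK // gt_eqF.
  have st1 : delta * M <= `|D kmax * w kmax| / K ^+ d kmax.
    by rewrite normrM -mulrA; apply: ler_wpM2r => //; apply: HD.
  rewrite Heq // in st1.
  apply: (le_trans st1).
  apply: (@le_trans _ _ (\sum_(k | e kmax k) ((K^-1 + t * K) * M))).
    apply: (@le_trans _ _ (\sum_(k | e kmax k)
        (`|if par kmax k then w k else tau kmax k * w k| / K ^+ d kmax))).
      rewrite -mulr_suml; apply: ler_wpM2r; last exact: ler_norm_sum.
      by rewrite invr_ge0 ltW.
    apply: ler_sum => k ek.
    case: ifP => pk.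
      rewrite (Hpar _ _ ek pk) exprS invfM mulrA [_ * K^-1]mulrC -mulrA.
      rewrite Kd mulfK ?gt_eqF //.
      rewrite mulrDl; apply: ler_wpDr; first by rewrite mulr_ge0 // mulr_ge0 // ltW.
      by apply: ler_wpM2l; [rewrite invr_ge0 ltW | apply: uk].
    rewrite normrM Kd (Hch _ _ ek (negbT pk)) exprS.
    have ut : `|tau kmax k| <= t := Htau kmax k.
    have uk0 : 0 <= u k by rewrite /u divr_ge0 // ?normr_ge0 // ltW.
    rewrite mulrA mulrA mulfK ?gt_eqF //.
    rewrite mulrDl; apply: ler_wpDl; first by rewrite mulr_ge0 // invr_ge0 ltW.
    have h1 : `|tau kmax k| * u k <= t * M by apply: ler_pM => //.
    rewrite -[t * K * M]mulrA [K * M]mulrC [t * (M * K)]mulrA.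
    by apply: ler_wpM2r => //; apply: ltW.
  rewrite (@le_trans _ _ (m%:R * ((K^-1 + t * K) * M))) //.
    apply: sum_le_const; last by [].
    apply: mulr_ge0 => //; apply: addr_ge0; first by rewrite invr_ge0 ltW.
    by apply: mulr_ge0 => //; apply: ltW.
  by rewrite mulrA; apply: ler_wpM2r.
move=> k; have := Hmax k isT; rewrite /u => H.
have : `|w k| / K ^+ d k <= 1 by apply: le_trans umax.
by rewrite ler_pdivrMr // mul1r.
Qed.
Lemma cvg0_bound (R : realType) (u b : nat -> R) :
  (\forall n \near \oo, `|u n| <= b n) -> b @ \oo --> 0 -> u @ \oo --> 0.
Proof.
move=> Hb b0.
apply: (@squeeze_cvgr _ _ _ _ (fun n => - b n) b).
  by near=> n; have := near Hb n; rewrite ler_norml => H; apply: H.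
  by rewrite -oppr0; apply: cvgN.
exact: b0.
Unshelve. all: by end_near.
Qed.

Lemma fin_pos_lb (R : realType) (I : finType) (P : pred I) (F : I -> R) :
  (forall i, P i -> 0 < F i) -> exists2 d, 0 < d & forall i, P i -> d <= F i.
Proof.
move=> HF.
exists (\big[Num.min/1]_(i | P i) F i).
  by apply: (big_ind (fun x => 0 < x)) => // x y x0 y0; rewrite lt_min x0 y0.
move=> i Pi; rewrite (bigD1 i) //=.
by rewrite ge_min lexx.
Qed.

Lemma eigen_eq (R : realType) (m : nat) (lam : 'I_m -> R) (A U : 'M[R]_m) (j a : 'I_m) :
  U^T *m U = 1%:M -> U^T *m A *m U = diag_mx (\row_k lam k) ->
  \sum_k A a k * U k j = U a j * lam j.
Proof.
move=> HU HUA.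
have HU' : U *m U^T = 1%:M by apply: mulmx1C.
have H : A *m U = U *m diag_mx (\row_k lam k).
  by rewrite -HUA !mulmxA HU' mul1mx.
have := congr1 (fun M : 'M[R]_m => M a j) H.
by rewrite mul_mx_diag !mxE => <-.
Qed.

Lemma cvg0_scale (R : realType) (u : nat -> R) (c : R) :
  u @ \oo --> 0 -> (c * u n) @[n --> \oo] --> 0.
Proof. by move=> u0; rewrite -(mulr0 c); apply: cvgMl_tmp. Qed.
Theorem lemma2p3 (R : realType) (m : nat) (lam : 'I_m -> R)
  (e : rel 'I_m) (g : 'I_m -> 'I_m -> nat) (N0 : nat)
  (t : nat -> R) (A U : nat -> 'M[R]_m) :
  (forall i j : 'I_m, (i < j)%N -> lam i < lam j) ->
  is_tree e ->
  (forall i j, g i j = g j i) ->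
  (max_on_edges e g * diam e < N0)%N ->
  (forall n, 0 < t n) ->
  t @ \oo --> 0 ->
  (forall n, in_MfG e (fun i j => N0 + g i j)%N (t n) (A n)) ->
  (forall n, in_E lam (A n)) ->
  (forall i j, (A n i j) @[n --> \oo] --> diag_mx (\row_k lam k) i j) ->
  (forall n, (U n)^T *m U n = 1%:M) ->
  (forall n (i : 'I_m), 0 <= U n i i) ->
  (forall n, (U n)^T *m A n *m U n = diag_mx (\row_k lam k)) ->
  forall (i j : 'I_m) (p : seq 'I_m), is_gpath e i j p ->
    (U n i j / t n ^+ path_weight (fun a b => N0 + g a b)%N i p)
      @[n --> \oo] --> path_coef lam i j p.
Proof.
move=> Hlam [[esym eirr] [conn acyc]] gsym HN0 tpos tlim HM _ HA HU Hdiag HUA i j p Hp.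
set f := (fun a b => (N0 + g a b)%N) in HM *.
have fsym : forall a b, f a b = f b a by move=> a b; rewrite /f gsym.
have N0pos : (0 < N0)%N by apply: leq_ltn_trans HN0.
have Pex : forall k, exists q, is_gpath e k j q := fun k => gpath_exists j k conn.
pose P k := xchoose (Pex k).
have HP : forall k, is_gpath e k j (P k) := fun k => xchooseP (Pex k).
have Pj : P j = [::] := gpath_nil (HP j).
have Puniq : forall k q, is_gpath e k j q -> P k = q :=
  fun k q H => gpath_unique esym acyc _ _ _ (HP k) H.
have Hedge : forall a b, e a b -> P a = b :: P b \/ P b = a :: P a :=
  fun a b => edge_par a b esym eirr acyc HP.
pose d k := size (P k).
pose s k := path_weight f k (P k).
have pwcons : forall a b q, path_weight f a (b :: q) = (f a b + path_weight f b q)%N.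
  by move=> a b q; rewrite /path_weight /= big_cons.
pose v n k := U n k j.
pose w n k := v n k / t n ^+ s k.
have tsn0 : forall n k, t n ^+ s k != 0 by move=> n k; rewrite expf_neq0 // gt_eqF.
have vw : forall n k, v n k = t n ^+ s k * w n k by move=> n k; rewrite /w mulrC divfK.
have Heig : forall n a,
    \sum_(k | e a k) t n ^+ f a k * v n k = (lam j - A n a a) * v n a.
  move=> n a.
  have E := eigen_eq _ _ lam (A n) (U n) j a (HU n) (HUA n).
  rewrite (bigD1 a) //= in E.
  have -> : \sum_(k | e a k) t n ^+ f a k * v n k =
            \sum_(k | k != a) A n a k * U n k j.
    rewrite big_mkcond [RHS]big_mkcond; apply: eq_bigr => k _.
    case: (eqVneq k a) => [->|nka]; first by rewrite (negPf (eirr a)).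
    have [_ HMn] := HM n.
    by rewrite HMn 1?eq_sym //; case: (e a k) => //; rewrite mul0r.
  have -> : \sum_(k | k != a) A n a k * U n k j = v n a * lam j - A n a a * v n a.
    by rewrite -E /v; ring.
  by rewrite /v; ring.
have Hweq : forall n a, (lam j - A n a a) * w n a =
    \sum_(k | e a k) (if P a == k :: P k then w n k else t n ^+ (2 * f a k) * w n k).
  move=> n a; apply: (mulfI (tsn0 n a)).
  rewrite mulrCA -vw -Heig mulr_sumr; apply: eq_bigr => k ek.
  case: ifP => [/eqP Pa|Pa].
    by rewrite vw /s Pa pwcons exprD mulrA.
  case: (Hedge a k ek) => [Pa'|Pk]; first by rewrite Pa' eqxx in Pa.
  by rewrite vw /s Pk pwcons fsym mul2n -addnn !exprD; ring.
have [delta d0 Hdl] : exists2 delta, 0 < delta &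
    forall a, a != j -> delta <= `|lam j - lam a| / 2.
  apply: (fin_pos_lb _ _ (fun a => a != j)) => a naj.
  rewrite divr_gt0 // normr_gt0 subr_eq0.
  case: (ltngtP a j) => [aj|ja|aj].
  - by rewrite gt_eqF // Hlam.
  - by rewrite lt_eqF // Hlam.
  - by move: naj; rewrite (val_inj aj) eqxx.
have evD : \forall n \near \oo, forall a, a != j -> delta <= `|lam j - A n a a|.
  apply: filter_forall => a.
  case: (eqVneq a j) => [->|naj]; first by near=> n => /eqP.
  have Hn : \forall n \near \oo, `|lam a - A n a a| <= delta.
    have := cvgr_dist_le _ _ (HA a a) _ d0; rewrite !mxE eqxx mulr1n; apply; typeclasses eauto.
  near=> n => _.
  have H : `|lam a - A n a a| <= delta by near: n.
  have H2 := Hdl a naj.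
  have H3 := ler_distD (A n a a) (lam j) (lam a).
  rewrite [`|lam a - A n a a|]distrC in H.
  lra.
have ev_t : forall eps, 0 < eps -> \forall n \near \oo, t n <= eps.
  move=> eps eps0; have Hn : \forall n \near \oo, `|t n| <= eps.
    by have := cvgr0_norm_le _ tlim _ eps0; apply; typeclasses eauto.
  near=> n; have : `|t n| <= eps by near: n.
  by rewrite ger0_norm // ltW.
have colnorm : forall n, \sum_k U n k j ^+ 2 = 1.
  move=> n; have := congr1 (fun M : 'M[R]_m => M j j) (HU n).
  rewrite !mxE eqxx mulr1n => <-; apply: eq_bigr => k _; by rewrite mxE expr2.
have vj1 : forall n, `|v n j| <= 1.
  move=> n; have : v n j ^+ 2 <= 1.
    rewrite -(colnorm n) (bigD1 j) //= -[leLHS]addr0 lerD2l.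
    by apply: sumr_ge0 => k _; apply: sqr_ge0.
  move=> H; rewrite ler_norml; apply/andP; split; nra.
have sj : s j = 0%N by rewrite /s Pj /path_weight big_nil.
have dj : d j = 0%N by rewrite /d Pj.
pose K : R := 1 + 4 * m%:R / delta.
have K1 : 1 <= K by rewrite /K lerDl divr_ge0 // ?mulr_ge0 // ltW.
have K0 : 0 < K by apply: lt_le_trans K1.
have HK1 : m%:R * K^-1 <= delta / 4.
  rewrite -[_ * K^-1]/(m%:R / K) ler_pdivrMr //.
  have -> : delta / 4 * K = delta / 4 + m%:R by rewrite /K; field; apply: lt0r_neq0.
  by rewrite lerDr divr_ge0 // ltW.
pose eps := delta / (4 * (m%:R + 1) * K).
have eps0 : 0 < eps by rewrite divr_gt0 // !mulr_gt0 // ltr_wpDl.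
have HK2 : forall x, 0 <= x -> x <= eps -> m%:R * (x * K) <= delta / 4.
  move=> x x0 xe.
  apply: (@le_trans _ _ ((m%:R + 1) * (eps * K))).
    apply: ler_pM => //; first by rewrite mulr_ge0 // ltW.
      by rewrite lerDl.
    by apply: ler_wpM2r => //; apply: ltW.
  rewrite /eps le_eqVlt; apply/orP; left; apply/eqP; field.
  have m1pos : 0 < m%:R + 1 :> R by have := ler0n R m; lra.
  by rewrite !gt_eqF.
have Hbound : \forall n \near \oo, forall k, `|w n k| <= K ^+ d k.
  near=> n.
  have t0 : 0 <= t n by apply: ltW.
  have t1 : t n <= 1 by near: n; apply: ev_t.
  have te : t n <= eps by near: n; apply: ev_t.
  apply: (@bound_step R m e j d (fun a k => P a == k :: P k) (w n)
           (fun a => lam j - A n a a) (fun a k => t n ^+ (2 * f a k))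
           delta (t n) K) => //.
  - by move=> a k _ /eqP Pa; rewrite /d Pa.
  - move=> a k ek /negP Pa; case: (Hedge a k ek) => [Pa'|Pk].
      by exfalso; apply: Pa; rewrite Pa'.
    by rewrite /d Pk.
  - by near: n.
  - move=> a k; rewrite ger0_norm ?exprn_ge0 //.
    have : (0 < 2 * f a k)%N by rewrite muln_gt0 /f addn_gt0 N0pos.
    case: (2 * f a k)%N => [//|q] _.
    by rewrite exprS -[leRHS]mulr1 ler_wpM2l // exprn_ile1.
  - have := HK1; have := HK2 (t n) t0 te; rewrite mulrDr; lra.
  - by rewrite /w sj expr0 divr1.
pose Cw := \sum_k K ^+ d k.
have Cw0 : 0 <= Cw by apply: sumr_ge0 => k _; apply: exprn_ge0; apply: ltW.
have KCw : forall k, K ^+ d k <= Cw.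
  move=> k; rewrite /Cw (bigD1 k) //= -[leLHS]addr0 lerD2l.
  by apply: sumr_ge0 => l _; apply: exprn_ge0; apply: ltW.
have tpow : forall n q, (0 < q)%N -> t n <= 1 -> t n ^+ q <= t n.
  move=> n [//|q] _ t1.
  by rewrite exprS -[leRHS]mulr1 ler_wpM2l ?exprn_ile1 // ltW.
have spos : forall k, k != j -> (0 < s k)%N.
  move=> k nkj; have := HP k; rewrite /s.
  case: (P k) => [|b q]; first by move=> /and3P [_ /eqP /= E _]; move: nkj; rewrite E eqxx.
  by move=> _; rewrite pwcons /f -addnA addn_gt0 N0pos.
have ev1 : \forall n \near \oo, t n <= 1 by apply: ev_t.
have Hv : \forall n \near \oo, forall k, k != j -> `|v n k| <= t n * Cw.
  near=> n => k nkj.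
  have t1 : t n <= 1 by near: n.
  have Hb : `|w n k| <= K ^+ d k by have := near Hbound n; apply.
  rewrite vw normrM ger0_norm; last by apply: exprn_ge0; apply: ltW.
  apply: ler_pM => //; first by apply: exprn_ge0; apply: ltW.
    by apply: tpow => //; apply: spos.
  by apply: le_trans Hb _.
have vjlim : v n j @[n --> \oo] --> (1 : R).
  have H0 : (v n j - 1) @[n --> \oo] --> (0 : R).
    apply: (cvg0_bound _ _ (fun n => (m%:R * Cw ^+ 2) * t n)); last by apply: cvg0_scale.
    near=> n.
    have t1 : t n <= 1 by near: n.
    have t0 : 0 <= t n by apply: ltW.
    have Hvn : forall k, k != j -> `|v n k| <= t n * Cw by near: n.
    have vj0 : 0 <= v n j by apply: Hdiag.
    have vj1' := vj1 n.
    have Es : 1 - v n j ^+ 2 = \sum_(k | k != j) v n k ^+ 2.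
      by rewrite -(colnorm n) (bigD1 j) //= addrC addrK.
    have Hs : \sum_(k | k != j) v n k ^+ 2 <= m%:R * (t n * Cw) ^+ 2.
      apply: sum_le_const; first by apply: sqr_ge0.
      move=> k nkj; rewrite -real_normK ?num_real // !expr2.
      by apply: ler_pM => //; apply: Hvn.
    have Ht2 : m%:R * (t n * Cw) ^+ 2 <= m%:R * Cw ^+ 2 * t n.
      have h : (t n * Cw) ^+ 2 <= Cw ^+ 2 * t n.
        rewrite exprMn mulrC; apply: ler_wpM2l; first by apply: sqr_ge0.
        by rewrite expr2 -[leRHS]mulr1 ler_wpM2l.
      by rewrite -mulrA; apply: ler_wpM2l.
    rewrite -Es in Hs.
    have vjle : v n j <= 1 by apply: le_trans (ler_norm _) vj1'.
    have : `|v n j - 1| <= 1 - v n j ^+ 2.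
      rewrite ler_norml; apply/andP; split; nra.
    move=> H; apply: (le_trans H); apply: (le_trans Hs Ht2).
  by apply/subr_cvg0.
have Hind : forall q a, is_gpath e a j q ->
    w n a @[n --> \oo] --> path_coef lam a j q.
  elim=> [|x q IH] a Ha.
    have aj : a = j by move: Ha => /and3P [_ /eqP /= -> _].
    subst a; rewrite /path_coef /= big_nil.
    apply: (cvg_trans _ vjlim); apply: near_eq_cvg; near=> n.
    by rewrite /w sj expr0 divr1.
  move: (Ha); rewrite gpath_cons => /and3P [eax nax Hx].
  have IHx := IH x Hx.
  have Pa : P a = x :: P x by rewrite (Puniq x q Hx); apply: Puniq.
  have aj : a != j.
    apply: contraNneq nax => ->.
    by move: Hx => /and3P [_ /eqP <- _]; apply: mem_last.
  pose Rn n := \sum_(k | e a k && (k != x)) t n ^+ (2 * f a k) * w n k.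
  have Heqa : forall n, (lam j - A n a a) * w n a = w n x + Rn n.
    move=> n; rewrite Hweq (bigD1 x) //= Pa eqxx; congr (_ + _).
    apply: eq_bigr => k /andP [_ nkx]; case: ifP => // /eqP [E].
    by rewrite E eqxx in nkx.
  have R0 : Rn n @[n --> \oo] --> (0 : R).
    apply: (cvg0_bound _ _ (fun n => m%:R * Cw * t n)); last by apply: cvg0_scale.
    near=> n.
    have t1 : t n <= 1 by near: n.
    have t0 : 0 <= t n by apply: ltW.
    have Hb : forall k, `|w n k| <= K ^+ d k by near: n.
    apply: le_trans (ler_norm_sum _ _ _) _.
    have -> : m%:R * Cw * t n = m%:R * (t n * Cw) by ring.
    apply: sum_le_const; first by apply: mulr_ge0.
    move=> k _; rewrite normrM ger0_norm ?exprn_ge0 //.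
    apply: ler_pM => //; first by apply: exprn_ge0.
      by apply: tpow => //; rewrite muln_gt0 /f addn_gt0 N0pos.
    exact: le_trans (Hb k) (KCw k).
  have Dlim : (lam j - A n a a) @[n --> \oo] --> lam j - lam a.
    apply: cvgB; first exact: cvg_cst.
    by have := HA a a; rewrite !mxE eqxx mulr1n.
  have Dnz : lam j - lam a != 0.
    by rewrite -normr_gt0; have := Hdl a aj; lra.
  have -> : path_coef lam a j (x :: q) = (path_coef lam x j q + 0) * (lam j - lam a)^-1.
    by rewrite addr0 /path_coef /= big_cons mulrC.
  apply: (cvg_trans _ (cvgM (cvgD IHx R0) (cvgV Dnz Dlim))).
  apply: near_eq_cvg; near=> n.
  have Dn : delta <= `|lam j - A n a a| by have := near evD n; apply.
  have Dn0 : lam j - A n a a != 0 by rewrite -normr_gt0; lra.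
  change ((w n x + Rn n) / (lam j - A n a a) = w n a).
  by rewrite -Heqa mulrC mulKf.
have := Hind p i Hp.
by rewrite /w /s /v (Puniq i p Hp).
Unshelve. all: by end_near.
Qed.
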